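(* Let $D$ be a division ring, $n\ge 1$, $1\le k\le n$, and let $A=(a_{ij})\in\mathbb{M}_n(D)$ be a matrix all of whose rows other than the $k$-th row are zero. Then $A$ is a sum of two nilpotent matrices in $\mathbb{M}_n(D)$ if and only if $a_{kk}=0$.
   Context: $\mathbb{M}_n(D)$ denotes the ring of $n\times n$ matrices over the division ring $D$. *)

(* Defs.v *)
From mathcomp Require Import all_boot all_algebra.
Set Implicit Arguments. Unset Strict Implicit. Unset Printing Implicit Defensive.
Import GRing.Theory.
Local Open Scope ring_scope.

Definition division_ring (R : unitRingType) : Prop :=
  forall x : R, x != 0 -> x \is a GRing.unit.

Definition mx_nilpotent (R : pzRingType) (n : nat) (A : 'M[R]_n) : Prop :=
  exists m : nat, A ^+ m = 0.

(* Main.v *)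
Require Import Defs.
From mathcomp Require Import all_boot all_algebra.
Import GRing.Theory.
Local Open Scope ring_scope.

Lemma tele (R : pzRingType) (N M : R) (m : nat) :
  N ^+ m.+1 - M ^+ m.+1 = \sum_(i < m.+1) M ^+ i * (N - M) * N ^+ (m - i).
Proof.
elim: m => [|m IH]; first by rewrite big_ord1 !expr0 mul1r mulr1 !expr1.
rewrite big_ord_recl /= expr0 mul1r subn0.
have -> : \sum_(i < m.+1) M ^+ (bump 0 i) * (N - M) * N ^+ (m.+1 - bump 0 i)
   = M * (N ^+ m.+1 - M ^+ m.+1).
  rewrite IH mulr_sumr; apply: eq_bigr => i _.
  by rewrite /bump /= add1n subSS exprS !mulrA.
rewrite [N ^+ m.+2]exprS [M ^+ m.+2]exprS mulrBr !mulrBl.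
by rewrite addrA addrNK.
Qed.

Lemma nilp_ge (R : pzRingType) (X : R) p i : X ^+ p = 0 -> (p <= i)%N -> X ^+ i = 0.
Proof. by move=> hX hi; rewrite -(subnKC hi) exprD hX mul0r. Qed.

Theorem lemma3p7 (D : unitRingType) (hD : division_ring D)
  (n : nat) (k : 'I_n) (A : 'M[D]_n)
  (hA : forall i j : 'I_n, i != k -> A i j = 0) :
  (exists B C : 'M[D]_n, [/\ mx_nilpotent B, mx_nilpotent C & A = B + C])
  <-> A k k = 0.
Proof.
have entry : forall P Q : 'M[D]_n, (P * (A * Q)) k k = P k k * (A * Q) k k.
  move=> P Q; rewrite -!mulmxE mxE (bigD1 k) //= big1 ?addr0 // => l hl.
  by rewrite mxE big1 ?mulr0 // => s _; rewrite hA ?mul0r.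
split; last first.
  move=> hkk; exists A, 0; split; last by rewrite addr0.
  - exists 2%N; rewrite expr2 -mulmxE; apply/matrixP => i j; rewrite !mxE.
    have [->|hik] := eqVneq i k; last by rewrite big1 // => l _; rewrite hA ?mul0r.
    rewrite (bigD1 k) //= hkk mul0r add0r big1 // => l hl; by rewrite (hA l) ?mulr0.
  - by exists 1%N; rewrite expr1.
move=> [B [C [[p hB] [q hC] hABC]]].
apply/eqP/negPn/negP => ha.
pose N := B; pose M := - C.
have hNM : N - M = A by rewrite /N /M opprK.
pose al i := (A * M ^+ i) k k.
pose be i := (A * N ^+ i) k k.
have key : forall m, be m.+1 - al m.+1 = \sum_(i < m.+1) al i * be (m - i)%N.
  move=> m; rewrite /al /be.
  have := congr1 (fun X => (A * X) k k) (@tele _ N M m) => /=.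
  rewrite mulrBr mxE [X in _ + X = _]mxE => ->.
  rewrite mulr_sumr summxE; apply: eq_bigr => i _.
  by rewrite hNM !mulrA -mulrA entry.
have hP : forall i, (p + q <= i)%N -> al i = 0 /\ be i = 0.
  move=> i hi; rewrite /al /be.
  have hN : N ^+ i = 0 by exact: (@nilp_ge _ B p i hB (leq_trans (leq_addr q p) hi)).
  have hM : M ^+ i = 0.
    by rewrite /M exprNn (@nilp_ge _ C q i hC (leq_trans (leq_addl p q) hi)) mulr0.
  by rewrite hN hM mulr0 mxE.
have a0 : al 0%N = A k k by rewrite /al expr0 mulr1.
have b0 : be 0%N = A k k by rewrite /be expr0 mulr1.
have exA : exists i, al i != 0 by exists 0%N; rewrite a0.
have ubA : forall i, al i != 0 -> (i <= p + q)%N.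
  move=> i hi; rewrite leqNgt; apply/negP => /ltnW /hP [h _]; by rewrite h eqxx in hi.
have exB : exists i, be i != 0 by exists 0%N; rewrite b0.
have ubB : forall i, be i != 0 -> (i <= p + q)%N.
  move=> i hi; rewrite leqNgt; apply/negP => /ltnW /hP [_ h]; by rewrite h eqxx in hi.
case: (ex_maxnP exA ubA) => I hI maxI.
case: (ex_maxnP exB ubB) => J hJ maxJ.
have alz : forall i, (I < i)%N -> al i = 0.
  move=> i hi; apply/eqP; apply/negPn/negP => /maxI; by rewrite leqNgt hi.
have bez : forall i, (J < i)%N -> be i = 0.
  move=> i hi; apply/eqP; apply/negPn/negP => /maxJ; by rewrite leqNgt hi.
have := key (I + J)%N.
rewrite alz ?bez; [| by rewrite ltnS leq_addl | by rewrite ltnS leq_addr].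
rewrite subrr.
have hIlt : (I < (I + J).+1)%N by rewrite ltnS leq_addr.
rewrite (bigD1 (Ordinal hIlt)) //= big1 ?addr0; last first.
  move=> i /eqP hi.
  have [hlt|hge] := ltnP I i; first by rewrite alz ?mul0r.
  have hne : (i < I)%N.
    by rewrite ltn_neqAle hge andbT; apply/eqP => e; apply: hi; apply: val_inj.
  rewrite bez ?mulr0 //.
  have := ltn_ord i; rewrite ltnS => hiIJ.
  rewrite -(ltn_add2r i) subnK // addnC; by rewrite ltn_add2r.
rewrite addKn => /esym/eqP.
have := hD _ hI => /unitrP [u [hu _]] habs.
by move: hJ; rewrite -[be J]mul1r -hu -mulrA (eqP habs) mulr0 eqxx.
Qed.
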